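(* For every positive integer $n$, \[ e^n=\sum_{k=0}^{n-1}\frac{n^k}{k!}+\frac{n^{n-1}}{(n-1)!}\left(1+n+\mathop{\mathrm{K}}_{m=1}^{\infty}\left(\frac{-n(m+n-1)}{m+2n+1}\right)\right), \] where in particular the continued fraction converges.
   Context: For sequences $(a_m)_{m\ge1}$, $(b_m)_{m\ge1}$ of complex numbers, $\mathop{\mathrm{K}}_{m=1}^{\infty}\left(\frac{a_m}{b_m}\right)$ denotes the continued fraction $\cfrac{a_1}{b_1+\cfrac{a_2}{b_2+\cfrac{a_3}{b_3+\cdots}}}$, whose value is the limit as $k\to\infty$ of its $k$-th approximants $\cfrac{a_1}{b_1+\cfrac{a_2}{\ddots+\cfrac{a_k}{b_k}}}$ (the $0$-th approximant being $0$). Here $a_m=-n(m+n-1)$ and $b_m=m+2n+1$. *)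

(* Defs.v *)
From Stdlib Require Import Reals Arith Factorial.
Open Scope R_scope.

Fixpoint cf_from (a b : nat -> R) (m k : nat) : R :=
  match k with
  | O => 0
  | S k' => a m / (b m + cf_from a b (S m) k')
  end.

(* k-th approximant of K_{m>=1} (a_m / b_m); the 0-th approximant is 0. *)
Definition cf_approx (a b : nat -> R) (k : nat) : R := cf_from a b 1 k.

Definition cf_a (n : nat) (m : nat) : R := - INR n * INR (m + n - 1).
Definition cf_b (n : nat) (m : nat) : R := INR (m + 2 * n + 1).

(* Main.v *)
Require Import Defs.
From Stdlib Require Import Reals Lra Lia Arith Factorial.
Open Scope R_scope.

Fixpoint ps (x : R) (N : nat) : R :=
  match N with O => 0 | S N' => ps x N' + x ^ N' / INR (fact N') end.

Lemma ps_sum x k : sum_f_R0 (fun i => / INR (fact i) * x ^ i) k = ps x (S k).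
Proof. induction k; simpl sum_f_R0; rewrite ?IHk; simpl; unfold Rdiv; ring. Qed.

Lemma ps_sum2 x k : sum_f_R0 (fun i => x ^ i / INR (fact i)) k = ps x (S k).
Proof. induction k; simpl sum_f_R0; rewrite ?IHk; simpl; unfold Rdiv; ring. Qed.

Lemma ps_cv x : Un_cv (ps x) (exp x).
Proof.
  intros eps Heps.
  destruct (proj2_sig (exist_exp x) eps Heps) as [N HN].
  exists (S N). intros m Hm. destruct m as [|m]; [lia|].
  rewrite <- ps_sum. unfold exp. apply HN. lia.
Qed.

Lemma ps_grow x : 0 <= x -> Un_growing (ps x).
Proof.
  intros Hx n. simpl. assert (0 <= x ^ n / INR (fact n)).
  { apply Rmult_le_pos. apply pow_le; auto. left; apply Rinv_0_lt_compat, INR_fact_lt_0. }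
  lra.
Qed.

Lemma ps_le_exp x N : 0 <= x -> ps x N <= exp x.
Proof. intros Hx. apply growing_ineq; [apply ps_grow; auto | apply ps_cv]. Qed.

Lemma fact_mul_le N j : (fact N * fact j <= fact (N + j))%nat.
Proof.
  induction j.
  - simpl. rewrite Nat.add_0_r. lia.
  - rewrite Nat.add_succ_r. simpl fact. nia.
Qed.

Lemma tail_part x N p : 0 <= x ->
  ps x (N + p) - ps x N <= x ^ N / INR (fact N) * ps x p.
Proof.
  intros Hx. induction p.
  - rewrite Nat.add_0_r. simpl. lra.
  - rewrite Nat.add_succ_r. simpl ps.
    assert (x ^ (N + p) / INR (fact (N + p)) <= x ^ N / INR (fact N) * (x ^ p / INR (fact p))).
    { rewrite pow_add.
      assert (H1 := fact_mul_le N p). apply le_INR in H1. rewrite mult_INR in H1.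
      assert (HN := INR_fact_lt_0 N). assert (Hp := INR_fact_lt_0 p).
      assert (HNp := INR_fact_lt_0 (N+p)).
      assert (0 <= x ^ N) by (apply pow_le; auto).
      assert (0 <= x ^ p) by (apply pow_le; auto).
      replace (x ^ N / INR (fact N) * (x ^ p / INR (fact p))) with
        ((x ^ N * x ^ p) / (INR (fact N) * INR (fact p))) by (field; lra).
      unfold Rdiv. apply Rmult_le_compat_l. nra.
      apply Rinv_le_contravar; nra. }
    nra.
Qed.

Lemma lim_le u l N C : Un_cv u l -> (forall p, u (N + p)%nat <= C) -> l <= C.
Proof.
  intros Hu Hb. destruct (Rle_or_lt l C) as [H|H]; auto.
  destruct (Hu (l - C)) as [M HM]; [lra|].
  specialize (HM (N + M)%nat ltac:(lia)). specialize (Hb M).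
  unfold Rdist in HM. apply Rabs_def2 in HM. lra.
Qed.

Lemma tail_bound x N : 0 <= x ->
  0 <= exp x - ps x N <= x ^ N / INR (fact N) * exp x.
Proof.
  intros Hx. split.
  - assert (H := ps_le_exp x N Hx). lra.
  - assert (Un_cv (fun M => ps x M - ps x N) (exp x - ps x N)).
    { apply CV_minus. apply ps_cv. intros e He; exists O; intros; unfold Rdist; rewrite Rminus_diag, Rabs_R0; auto. }
    apply (lim_le _ _ N _ H). intros p.
    eapply Rle_trans. apply tail_part; auto.
    apply Rmult_le_compat_l.
    apply Rmult_le_pos. apply pow_le; auto. left; apply Rinv_0_lt_compat, INR_fact_lt_0.
    apply ps_le_exp; auto.
Qed.
Open Scope R_scope.

Lemma cf_a_S n' m : cf_a (S n') m = - (INR n' + 1) * (INR m + INR n').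
Proof.
  unfold cf_a. replace (m + S n' - 1)%nat with (m + n')%nat by lia.
  rewrite plus_INR, S_INR. ring.
Qed.

Lemma cf_b_S n' m : cf_b (S n') m = INR m + 2 * INR n' + 3.
Proof.
  unfold cf_b. rewrite !plus_INR, mult_INR, !S_INR. simpl. ring.
Qed.

Lemma cf_inv n' : forall k m,
  - (INR n' + 1) <= cf_from (cf_a (S n')) (cf_b (S n')) m k <= 0.
Proof.
  assert (Hn := pos_INR n').
  induction k; intros m.
  - simpl. lra.
  - simpl cf_from. specialize (IHk (S m)).
    set (e := cf_from _ _ (S m) k) in *.
    rewrite cf_a_S, cf_b_S.
    assert (Hm := pos_INR m).
    set (d := INR m + 2 * INR n' + 3 + e).
    assert (Hd : INR m + INR n' + 2 <= d) by (unfold d; lra).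
    split.
    + apply (Rmult_le_reg_r d). lra.
      unfold Rdiv. rewrite Rmult_assoc, Rinv_l by lra. nra.
    + apply (Rmult_le_reg_r d). lra.
      unfold Rdiv. rewrite Rmult_assoc, Rinv_l by lra. nra.
Qed.

Section Delta.
Variable n' : nat.
Let x := INR n' + 1.
Let A := cf_a (S n').
Let B := cf_b (S n').
Variable w : nat -> R.
Hypothesis rec : forall m, w m = B (S m) * w (S m) + A (S (S m)) * w (S (S m)).

Lemma delta_bound : forall k m,
  Rabs (cf_from A B (S m) k * w m - A (S m) * w (S m))
  <= x ^ k * Rabs (A (S (m + k)) * w (S (m + k))).
Proof.
  induction k; intros m.
  - simpl. rewrite Nat.add_0_r. replace (0 * w m - A (S m) * w (S m)) with (- (A (S m) * w (S m))) by ring.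
    rewrite Rabs_Ropp. lra.
  - simpl cf_from.
    assert (Hi := cf_inv n' k (S (S m))). fold A B in Hi.
    set (e := cf_from A B (S (S m)) k) in *.
    assert (Hn := pos_INR n'). assert (Hm := pos_INR m).
    assert (Hd : INR m + INR n' + 3 <= B (S m) + e).
    { unfold B. rewrite cf_b_S, S_INR. unfold x in Hi. lra. }
    replace (A (S m) / (B (S m) + e) * w m - A (S m) * w (S m)) with
      (- (A (S m) / (B (S m) + e)) * (e * w (S m) - A (S (S m)) * w (S (S m)))).
    2:{ rewrite (rec m). field. lra. }
    rewrite Rabs_mult, Rabs_Ropp.
    replace (m + S k)%nat with (S m + k)%nat by lia.
    simpl pow. rewrite Rmult_assoc.
    apply Rmult_le_compat. apply Rabs_pos. apply Rabs_pos.
    + unfold A. rewrite cf_a_S.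
      assert (Hq : (- (INR n' + 1) * (INR (S m) + INR n')) / (B (S m) + e) * (B (S m) + e)
                = - (INR n' + 1) * (INR (S m) + INR n')) by (field; lra).
      rewrite S_INR in Hq |- *.
      rewrite Rabs_left1.
      2:{ apply (Rmult_le_reg_r (B (S m) + e)). lra. rewrite Hq. nra. }
      apply (Rmult_le_reg_r (B (S m) + e)). lra.
      rewrite Ropp_mult_distr_l_reverse, Hq. unfold x. nra.
    + apply IHk.
Qed.
End Delta.
Section Main.
Variable n' : nat.
Let x := INR n' + 1.
Let E := exp x.
Definition ww (m : nat) : R :=
  / INR (fact (n' + m)) - INR m * (exp (INR n' + 1) - ps (INR n' + 1) (S n' + m)) / (INR n' + 1) ^ (S n' + m).

Lemma x_pos : 0 < x.
Proof. unfold x. assert (H := pos_INR n'). lra. Qed.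

Lemma ww_rec m : ww m = cf_b (S n') (S m) * ww (S m) + cf_a (S n') (S (S m)) * ww (S (S m)).
Proof.
  rewrite cf_a_S, cf_b_S. unfold ww. fold x.
  rewrite !Nat.add_succ_r, !Nat.add_succ_l. cbn [ps fact pow].
  repeat rewrite ?plus_INR, ?mult_INR, ?S_INR.
  assert (Hx := x_pos). assert (HF := INR_fact_lt_0 (n' + m)).
  assert (HX : 0 < x ^ (n' + m)) by (apply pow_lt; auto).
  assert (Hn := pos_INR n'). assert (Hm := pos_INR m).
  set (F := INR (fact (n' + m))) in *.
  set (X := x ^ (n' + m)) in *.
  set (P := ps x (n' + m)).
  set (Ex := exp x).
  replace (INR n') with (x - 1) by (unfold x; ring). clearbody Ex P X F x. field. repeat split; try lra; nra.
Qed.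
End Main.

Lemma abs_sub_le a b c : 0 <= a -> 0 <= b <= c -> Rabs (a - b) <= a + c.
Proof. intros. unfold Rabs; destruct (Rcase_abs _); lra. Qed.

Lemma ww_bound n' k :
  Rabs (cf_a (S n') (S k) * ww n' (S k)) <=
  (INR n' + 1) * (1 + exp (INR n' + 1)) / INR (fact k).
Proof.
  assert (Hx := x_pos n'). set (x := INR n' + 1) in *.
  set (E := exp x). assert (HE : 0 < E) by apply exp_pos.
  assert (Hn := pos_INR n'). assert (Hk := pos_INR k).
  rewrite cf_a_S. fold x. unfold ww. fold x. fold E.
  set (N := (S n' + S k)%nat).
  assert (Ht := tail_bound x N ltac:(lra)). fold E in Ht.
  set (R := E - ps x N) in *.
  assert (HX : 0 < x ^ N) by (apply pow_lt; auto).
  set (X := x ^ N) in *.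
  assert (HFN : INR (fact N) = (INR n' + INR k + 2) * INR (fact (n' + S k))).
  { unfold N. rewrite Nat.add_succ_l. cbn [fact]. rewrite mult_INR, S_INR, plus_INR, S_INR. ring. }
  assert (HF1 : INR (fact (n' + S k)) = (INR n' + INR k + 1) * INR (fact (n' + k))).
  { rewrite Nat.add_succ_r. cbn [fact]. rewrite mult_INR, S_INR, plus_INR. ring. }
  assert (HFk : INR (fact k) <= INR (fact (n' + k))) by (apply le_INR, fact_le; lia).
  assert (H0 := INR_fact_lt_0 k).
  rewrite HFN in Ht. rewrite HF1 in Ht |- *.
  set (F0 := INR (fact k)) in *. set (Fk := INR (fact (n' + k))) in *.
  assert (HRX : R / X <= E / ((INR n' + INR k + 2) * ((INR n' + INR k + 1) * Fk))).
  { apply (Rmult_le_reg_r X); auto. unfold Rdiv at 1. rewrite Rmult_assoc, Rinv_l by lra.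
    replace (E / ((INR n' + INR k + 2) * ((INR n' + INR k + 1) * Fk)) * X) with
      (X / ((INR n' + INR k + 2) * ((INR n' + INR k + 1) * Fk)) * E) by (field; split; lra).
    lra. }
  assert (HR0 : 0 <= R / X) by (apply Rmult_le_pos; [lra| left; apply Rinv_0_lt_compat; lra]).
  assert (Hb : 0 <= INR (S k) * R / X <= E / ((INR n' + INR k + 1) * Fk)).
  { rewrite S_INR. unfold Rdiv at 1. rewrite Rmult_assoc. fold (R / X). split. nra.
    apply Rle_trans with ((INR k + 1) * (E / ((INR n' + INR k + 2) * ((INR n' + INR k + 1) * Fk)))).
    nra.
    replace ((INR k + 1) * (E / ((INR n' + INR k + 2) * ((INR n' + INR k + 1) * Fk)))) with
      (E / ((INR n' + INR k + 1) * Fk) * ((INR k + 1) / (INR n' + INR k + 2))) by (field; lra).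
    assert (0 <= E / ((INR n' + INR k + 1) * Fk)) by (apply Rmult_le_pos; [lra| left; apply Rinv_0_lt_compat; nra]).
    assert ((INR k + 1) / (INR n' + INR k + 2) <= 1).
    { apply (Rmult_le_reg_r (INR n' + INR k + 2)). lra.
      unfold Rdiv; rewrite Rmult_assoc, Rinv_l by lra. lra. }
    nra. }
  assert (Hw := abs_sub_le (/ ((INR n' + INR k + 1) * Fk)) _ _
                  ltac:(left; apply Rinv_0_lt_compat; nra) Hb).
  rewrite Rabs_mult.
  rewrite Rabs_left1 by (rewrite S_INR; nra).
  replace (/ ((INR n' + INR k + 1) * Fk) + E / ((INR n' + INR k + 1) * Fk)) with
    ((1 + E) / ((INR n' + INR k + 1) * Fk)) in Hw by (field; nra).
  apply Rle_trans with (x * (INR (S k) + INR n') * ((1 + E) / ((INR n' + INR k + 1) * Fk))).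
  { replace (- (- x * (INR (S k) + INR n'))) with (x * (INR (S k) + INR n')) by ring. apply Rmult_le_compat_l; [rewrite S_INR; nra | exact Hw]. }
  rewrite S_INR.
  replace (x * (INR k + 1 + INR n') * ((1 + E) / ((INR n' + INR k + 1) * Fk))) with (x * (1 + E) / Fk) by (field; nra).
  unfold Rdiv. apply Rmult_le_compat_l. nra. apply Rinv_le_contravar; lra.
Qed.

Theorem theorem2p1 (n : nat) (hn : (1 <= n)%nat) :
  exists L : R,
    Un_cv (cf_approx (cf_a n) (cf_b n)) L /\
    exp (INR n) =
      sum_f_R0 (fun k => INR n ^ k / INR (fact k)) (n - 1)
      + INR n ^ (n - 1) / INR (fact (n - 1)) * (1 + INR n + L).
Proof.
  destruct n as [|n']; [lia|].
  assert (Hx := x_pos n'). rewrite S_INR.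
  set (x := INR n' + 1) in *.
  set (E := exp x). assert (HE : 0 < E) by apply exp_pos.
  assert (Hw0 : ww n' 0 = / INR (fact n')).
  { unfold ww. rewrite Nat.add_0_r. simpl INR. unfold Rdiv. ring. }
  assert (HF := INR_fact_lt_0 n').
  assert (Hw0p : 0 < ww n' 0) by (rewrite Hw0; apply Rinv_0_lt_compat; auto).
  exists (cf_a (S n') 1 * ww n' 1 / ww n' 0). split.
  - intros eps Heps.
    set (K := x * (1 + E) / ww n' 0).
    assert (HK : 0 < K) by (unfold K; apply Rmult_lt_0_compat; [nra | apply Rinv_0_lt_compat; auto]).
    destruct (cv_speed_pow_fact x (eps / K)) as [N HN].
    { apply Rmult_lt_0_compat; auto. apply Rinv_0_lt_compat; auto. }
    exists N. intros k Hk. specialize (HN k Hk).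
    unfold Rdist in *. rewrite Rminus_0_r in HN.
    assert (Hd := delta_bound n' (ww n') (ww_rec n') k 0).
    assert (Hb := ww_bound n' k). fold x E in Hb.
    simpl plus in Hd. fold x in Hd.
    unfold cf_approx.
    replace (cf_from (cf_a (S n')) (cf_b (S n')) 1 k - cf_a (S n') 1 * ww n' 1 / ww n' 0)
      with ((cf_from (cf_a (S n')) (cf_b (S n')) 1 k * ww n' 0 - cf_a (S n') 1 * ww n' 1) / ww n' 0)
      by (field; lra).
    unfold Rdiv at 1. rewrite Rabs_mult, (Rabs_right (/ ww n' 0)) by (left; apply Rinv_0_lt_compat; auto).
    assert (Hxk : 0 <= x ^ k) by (apply pow_le; lra).
    assert (Hq : x ^ k * Rabs (cf_a (S n') (S k) * ww n' (S k)) <= K * ww n' 0 * (x ^ k / INR (fact k))).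
    { unfold K. replace (x * (1 + E) / ww n' 0 * ww n' 0 * (x ^ k / INR (fact k))) with
        (x ^ k * (x * (1 + E) / INR (fact k))) by (field; repeat split; try lra; apply INR_fact_neq_0).
      apply Rmult_le_compat_l; auto. }
    assert (Hpos : 0 <= x ^ k / INR (fact k)) by (apply Rmult_le_pos; auto; left; apply Rinv_0_lt_compat, INR_fact_lt_0).
    rewrite Rabs_right in HN by lra.
    assert (Habs : Rabs (cf_from (cf_a (S n')) (cf_b (S n')) 1 k * ww n' 0 - cf_a (S n') 1 * ww n' 1) <= K * ww n' 0 * (x ^ k / INR (fact k))) by lra.
    apply Rle_lt_trans with (K * ww n' 0 * (x ^ k / INR (fact k)) * / ww n' 0).
    + apply Rmult_le_compat_r; auto. left; apply Rinv_0_lt_compat; auto.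
    + replace (K * ww n' 0 * (x ^ k / INR (fact k)) * / ww n' 0) with (K * (x ^ k / INR (fact k))) by (field; repeat split; try lra; apply INR_fact_neq_0).
      replace eps with (K * (eps / K)) by (field; lra).
      apply Rmult_lt_compat_l; auto.
  - replace (S n' - 1)%nat with n' by lia.
    rewrite ps_sum2. rewrite Hw0.
    unfold ww. rewrite cf_a_S. fold x. fold E.
    replace (S n' + 1)%nat with (S (S n')) by lia.
    replace (n' + 1)%nat with (S n') by lia.
    cbn [ps fact pow]. rewrite mult_INR, !S_INR. change (INR 0) with 0.
    set (P := ps x n'). set (X := x ^ n').
    assert (HX : 0 < X) by (apply pow_lt; lra).
    set (F := INR (fact n')) in *.
    replace (INR n') with (x - 1) by (unfold x; ring).
    clearbody P X F E x.
    field. lra.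
Qed.
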